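(* Let $q$ be a power of an odd prime. Then in ${\rm PG}(4,q)$ there exist a set $\mathcal L$ of $q^3+1$ pairwise skew lines and a set $\mathcal P$ of $q^3+1$ planes any two of which intersect in exactly one point, such that no line of $\mathcal L$ is contained in a plane of $\mathcal P$. *)

(* Defs.v *)
(* PG(4,q) = projective geometry of the vector space F^5
   ('rV[F]_5) over a finite field F with #|F| = q.
   Projective points/lines/planes = vector subspaces of dimension 1/2/3. *)
From HB Require Import structures.
From mathcomp Require Import all_boot all_order all_algebra all_field.
Set Implicit Arguments. Unset Strict Implicit. Unset Printing Implicit Defensive.
Import GRing.Theory.
Local Open Scope ring_scope.

Definition odd_prime_power (q : nat) : Prop :=
  exists p k : nat, [/\ prime p, odd p, (0 < k)%N & q = (p ^ k)%N].

Section PG4.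
Variable F : finFieldType.
Definition PG4_space := 'rV[F]_5.

Definition is_line (U : {vspace PG4_space}) : Prop := \dim U = 2%N.
Definition is_plane (U : {vspace PG4_space}) : Prop := \dim U = 3%N.

Definition skew_lines (U V : {vspace PG4_space}) : Prop := (U :&: V)%VS = 0%VS.

Definition meet_in_point (U V : {vspace PG4_space}) : Prop :=
  \dim (U :&: V) = 1%N.
End PG4.

(* Main.v *)
Require Import Defs.
From mathcomp Require Import all_boot all_order all_algebra all_field.
From mathcomp Require Import ring.
Set Implicit Arguments. Unset Strict Implicit. Unset Printing Implicit Defensive.
Import GRing.Theory.

Section Alg.
Local Open Scope ring_scope.
Variable F : fieldType.
Variable c : F.
Hypothesis Hc : forall x : F, x ^+ 3 - x != c.

Lemma eq_from (X Y U V : F) : U = V -> X - Y = U - V -> X = Y.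
Proof. by move=> ->; rewrite subrr => /eqP; rewrite subr_eq0 => /eqP. Qed.

Lemma eq_fromk (k X Y U V : F) : U = V -> X - Y = k * (U - V) -> X = Y.
Proof. by move=> ->; rewrite subrr mulr0 => /eqP; rewrite subr_eq0 => /eqP. Qed.

Lemma eq_lc (al be X Y U1 U2 : F) : U1 = 0 -> U2 = 0 -> X - Y = al * U1 + be * U2 -> X = Y.
Proof. by move=> -> ->; rewrite !mulr0 addr0 => /eqP; rewrite subr_eq0 => /eqP. Qed.

Lemma zero_from (X U V : F) : U = V -> X = U - V -> X = 0.
Proof. by move=> -> ->; rewrite subrr. Qed.

Lemma Hhom (x y : F) : y != 0 -> x ^+ 3 - x * y ^+ 2 - c * y ^+ 3 != 0.
Proof.
move=> y0.
have -> : x ^+ 3 - x * y ^+ 2 - c * y ^+ 3 = y ^+ 3 * ((x / y) ^+ 3 - x / y - c).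
  by field.
by rewrite mulf_neq0 ?expf_neq0 // subr_eq0 Hc.
Qed.

Lemma c_neq0 : c != 0.
Proof. by move: (Hc 0); rewrite expr0n /= subr0 eq_sym. Qed.

Lemma skew_alg (k1 k2 d1 d2 d3 : F) :
  k1 * d1 + k2 * (c * d3) = 0 -> k1 * d2 + k2 * (d1 + d3) = 0 ->
  k1 * d3 + k2 * d2 = 0 -> [|| d1 != 0, d2 != 0 | d3 != 0] ->
  k1 = 0 /\ k2 = 0.
Proof.
move=> E1 E2 E3 dnz.
have k20 : k2 = 0.
  apply/eqP; apply/negPn/negP => k2nz.
  have d30 : d3 = 0.
    have : d3 * ((-k1) ^+ 3 - (-k1) * k2 ^+ 2 - c * k2 ^+ 3) = 0.
      rewrite (_ : d3 * _ = - k2 ^+ 2 * (k1 * d1 + k2 * (c * d3))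
        + k2 * k1 * (k1 * d2 + k2 * (d1 + d3)) - k1 ^+ 2 * (k1 * d3 + k2 * d2));
        last by ring.
      by rewrite E1 E2 E3; ring.
    by move/eqP; rewrite mulf_eq0 (negPf (Hhom _ k2nz)) orbF => /eqP.
  move: E3; rewrite d30 mulr0 add0r => /eqP; rewrite mulf_eq0 (negPf k2nz) /= => /eqP d20.
  move: E2; rewrite d20 d30 mulr0 addr0 add0r => /eqP; rewrite mulf_eq0 (negPf k2nz) /= => /eqP d10.
  by move: dnz; rewrite d10 d20 d30 eqxx.
split=> //.
move: E1 E2 E3; rewrite k20 !mul0r !addr0 => /eqP; rewrite mulf_eq0 => /orP[/eqP //|/eqP d10].
move=> /eqP; rewrite mulf_eq0 => /orP[/eqP //|/eqP d20].
move=> /eqP; rewrite mulf_eq0 => /orP[/eqP //|/eqP d30].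
by move: dnz; rewrite d10 d20 d30 eqxx.
Qed.

(* the plane difference matrix has rank 2 *)
Lemma minors_alg (t1 t2 s : F) :
  c * t2 ^+ 2 - t1 * t2 - s * t1 = 0 -> t1 ^+ 2 + s * t2 = 0 ->
  s ^+ 2 + s * t2 + c * t1 * t2 = 0 -> [/\ t1 = 0, t2 = 0 & s = 0].
Proof.
move=> M23 M13 M12.
have t20 : t2 = 0.
  apply/eqP; apply/negPn/negP => t2nz.
  move: (Hhom (- t1) t2nz); rewrite (_ : _ - _ = - (t2 * (c * t2 ^+ 2 - t1 * t2 - s * t1) + t1 * (t1 ^+ 2 + s * t2))); last by ring.
  by rewrite M23 M13 !mulr0 addr0 oppr0 eqxx.
move: M13; rewrite t20 mulr0 addr0 => /eqP; rewrite expf_eq0 /= => /eqP t10.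
move: M12; rewrite t20 t10 !mulr0 !addr0 => /eqP; rewrite expf_eq0 /= => /eqP s0.
by [].
Qed.

Lemma par_alg (k1 k2 k3 z1 z2 z3 : F) :
  [|| z1 != 0, z2 != 0 | z3 != 0] ->
  k2 * z3 = k3 * z2 -> k1 * z3 = k3 * z1 -> k1 * z2 = k2 * z1 ->
  exists l, [/\ k1 = l * z1, k2 = l * z2 & k3 = l * z3].
Proof.
move=> /orP[z1nz|/orP[z2nz|z3nz]] E1 E2 E3.
- exists (k1 / z1); split.
  + by rewrite divfK.
  + by apply: (mulIf z1nz); rewrite mulrAC divfK // E3.
  + by apply: (mulIf z1nz); rewrite mulrAC divfK // E2.
- exists (k2 / z2); split.
  + by apply: (mulIf z2nz); rewrite mulrAC divfK // E3.
  + by rewrite divfK.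
  + by apply: (mulIf z2nz); rewrite mulrAC divfK // E1.
- exists (k3 / z3); split.
  + by apply: (mulIf z3nz); rewrite mulrAC divfK // E2.
  + by apply: (mulIf z3nz); rewrite mulrAC divfK // E1.
  + by rewrite divfK.
Qed.

Lemma contain_alg (a1 a2 a3 t1 t2 s : F) :
  a2 = s + a1 * t1 -> a3 = - t1 + a1 * t2 ->
  a1 + a3 = c * t2 + (c * a3) * t1 -> a2 = (1 + t2 + s) + (c * a3) * t2 -> False.
Proof.
move=> H1 H2 H3 H4; subst a2 a3.
set P := t1 - c * t2 ^+ 2.
set Q := 1 + t2 - c * t1 * t2.
set R := t1 + c * t2 - c * t1 ^+ 2.
set h1 := t1 ^+ 2 - t2 - t2 ^+ 2.
have EA : a1 * P = Q by apply: (eq_from H4); rewrite /P /Q; ring.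
have EB : a1 * Q = R by apply: (eq_from H3); rewrite /Q /R; ring.
have [P0|Pnz] := eqVneq P 0.
  have Q0 : Q = 0 by rewrite -EA P0 mulr0.
  move: (Hc (c * t2)); rewrite (_ : _ - _ = - c * Q - c ^+ 2 * t2 * P + c); last first.
    by rewrite /P /Q; ring.
  by rewrite P0 Q0 !mulr0 subr0 add0r eqxx.
have D0 : P * R - Q ^+ 2 = 0.
  by rewrite -EB expr2 -{2}EA; ring.
have h1Q : h1 * Q = P ^+ 2.
  by apply: (eq_fromk (k:=t2) D0); rewrite /h1 /P /Q /R; ring.
have h1nz : h1 != 0.
  by apply/eqP => h10; move: h1Q; rewrite h10 mul0r => /esym/eqP; rewrite expf_eq0 /= (negPf Pnz).
move: (Hhom (- P) h1nz).
rewrite (_ : _ - _ = (P * R - Q ^+ 2) * (h1 * t1 + P * t2)); last first.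
  by rewrite /h1 /P /Q /R; ring.
by rewrite D0 mul0r eqxx.
Qed.

End Alg.

Section Geo.
Local Open Scope ring_scope.
Variable F : finFieldType.
Notation V := (PG4_space F).

Definition v5 (x1 x2 x3 x4 x5 : F) : V :=
  \row_(i < 5) nth 0 [:: x1; x2; x3; x4; x5] i.

Lemma v5_inj (x1 x2 x3 x4 x5 y1 y2 y3 y4 y5 : F) :
  v5 x1 x2 x3 x4 x5 = v5 y1 y2 y3 y4 y5 ->
  [/\ x1 = y1, x2 = y2, x3 = y3, x4 = y4 & x5 = y5].
Proof.
move=> /rowP H.
move: (H (@Ordinal 5 0 isT)) (H (@Ordinal 5 1 isT)) (H (@Ordinal 5 2 isT))
  (H (@Ordinal 5 3 isT)) (H (@Ordinal 5 4 isT)); rewrite !mxE /=.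
by move=> -> -> -> -> ->.
Qed.

Lemma v5_add (x1 x2 x3 x4 x5 y1 y2 y3 y4 y5 : F) :
  v5 x1 x2 x3 x4 x5 + v5 y1 y2 y3 y4 y5 = v5 (x1+y1) (x2+y2) (x3+y3) (x4+y4) (x5+y5).
Proof. by apply/rowP => i; rewrite !mxE; case: i => [[|[|[|[|[|i]]]]] Hi]. Qed.

Lemma v5_scale (k x1 x2 x3 x4 x5 : F) :
  k *: v5 x1 x2 x3 x4 x5 = v5 (k*x1) (k*x2) (k*x3) (k*x4) (k*x5).
Proof. by apply/rowP => i; rewrite !mxE; case: i => [[|[|[|[|[|i]]]]] Hi]. Qed.

Lemma v5_0 : 0 = v5 0 0 0 0 0.
Proof. by apply/rowP => i; rewrite !mxE; case: i => [[|[|[|[|[|i]]]]] Hi]. Qed.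

Lemma dimV5 : \dim (fullv : {vspace V}) = 5%N.
Proof. by rewrite dimvf /dim /= mul1n. Qed.

Definition ln2 (u w : V) : {vspace V} := (<[u]> + <[w]>)%VS.
Definition pl3 (u v w : V) : {vspace V} := (<[u]> + <[v]> + <[w]>)%VS.

Lemma mem2P (u w x : V) :
  reflect (exists k1 k2, x = k1 *: u + k2 *: w) (x \in ln2 u w).
Proof.
apply: (iffP memv_addP) => [[y /vlineP[k1 ->] [z /vlineP[k2 ->] ->]]|[k1 [k2 ->]]].
  by exists k1, k2.
by exists (k1 *: u); rewrite ?memvZ ?memv_line //; exists (k2 *: w); rewrite ?memvZ ?memv_line.
Qed.

Lemma mem3P (u v w x : V) :
  reflect (exists k1 k2 k3, x = k1 *: u + k2 *: v + k3 *: w) (x \in pl3 u v w).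
Proof.
apply: (iffP memv_addP) => [[y /mem2P[k1 [k2 ->]] [z /vlineP[k3 ->] ->]]|[k1 [k2 [k3 ->]]]].
  by exists k1, k2, k3.
exists (k1 *: u + k2 *: v); first by apply/mem2P; exists k1, k2.
by exists (k3 *: w); rewrite ?memvZ ?memv_line.
Qed.

Lemma ln2_l (u w : V) : u \in ln2 u w.
Proof. by apply/mem2P; exists 1, 0; rewrite scale1r scale0r addr0. Qed.
Lemma ln2_r (u w : V) : w \in ln2 u w.
Proof. by apply/mem2P; exists 0, 1; rewrite scale1r scale0r add0r. Qed.

Lemma cap0 (U W : {vspace V}) :
  (forall x, x \in U -> x \in W -> x = 0) -> (U :&: W = 0)%VS.
Proof.
move=> H; apply/eqP; rewrite -subv0; apply/subvP => x.
by rewrite memv_cap memv0 => /andP[xU xW]; apply/eqP; apply: H.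
Qed.

Lemma dim_ln2 (u w : V) :
  (forall k1 k2, k1 *: u + k2 *: w = 0 -> k1 = 0 /\ k2 = 0) -> \dim (ln2 u w) = 2%N.
Proof.
move=> H; rewrite /ln2 dimv_disjoint_sum ?dim_vline.
  have -> : u != 0.
    apply/eqP => u0; case: (H 1 0); first by rewrite u0 scaler0 scale0r addr0.
    by move/eqP; rewrite oner_eq0.
  have -> : w != 0.
    apply/eqP => w0; case: (H 0 1); first by rewrite w0 scaler0 scale0r addr0.
    by move=> _ /eqP; rewrite oner_eq0.
  by [].
apply: cap0 => x /vlineP[k1 ->] /vlineP[k2 E].
case: (H k1 (- k2)) => [|-> _]; last by rewrite scale0r.
by rewrite E scaleNr addrN.
Qed.

Lemma dim_pl3 (u v w : V) :
  (forall k1 k2 k3, k1 *: u + k2 *: v + k3 *: w = 0 -> [/\ k1 = 0, k2 = 0 & k3 = 0]) ->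
  \dim (pl3 u v w) = 3%N.
Proof.
move=> H; rewrite /pl3 dimv_disjoint_sum ?dim_vline.
  rewrite (dim_ln2 (u:=u) (w:=v)); last first.
    by move=> k1 k2 E; case: (H k1 k2 0); rewrite ?scale0r ?addr0.
  have -> : w != 0.
    apply/eqP => w0; case: (H 0 0 1); first by rewrite w0 scaler0 !scale0r !addr0.
    by move=> _ _ /eqP; rewrite oner_eq0.
  by [].
apply: cap0 => x /mem2P[k1 [k2 ->]] /vlineP[k3 E].
case: (H k1 k2 (- k3)) => [|-> -> _]; last by rewrite !scale0r addr0.
by rewrite E scaleNr addrN.
Qed.

Lemma dim_cap1 (A B : {vspace V}) (z : V) :
  \dim A = 3%N -> \dim B = 3%N ->
  (forall x, x \in A -> x \in B -> x \in <[z]>%VS) -> \dim (A :&: B) = 1%N.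
Proof.
move=> dA dB H.
have le1 : (\dim (A :&: B) <= 1)%N.
  apply: (leq_trans (dimvS (U:=A :&: B) (V:=<[z]>%VS) _)).
    by apply/subvP => x; rewrite memv_cap => /andP[]; apply: H.
  by rewrite dim_vline; case: (z != 0).
have le5 : (\dim (A + B) <= 5)%N.
  by apply: leq_trans (dimvS (subvf _)) _; rewrite dimV5.
have := dimv_sum_cap A B; rewrite dA dB.
move: le1 le5; case: (\dim (A :&: B)) => [|[|n]] //.
by rewrite addn0 => _ le5 E; move: le5; rewrite E.
Qed.

Variable c : F.
Hypothesis Hc : forall x : F, x ^+ 3 - x != c.

Definition lineA3 (a1 a2 a3 : F) : {vspace V} :=
  ln2 (v5 1 0 a1 a2 a3) (v5 0 1 (c * a3) (a1 + a3) a2).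
Definition lineA (a : F * F * F) := let: (a12, a3) := a in let: (a1, a2) := a12 in lineA3 a1 a2 a3.
Definition lineI : {vspace V} := ln2 (v5 0 0 1 0 0) (v5 0 0 0 1 0).
Definition planeB3 (t1 t2 s : F) : {vspace V} :=
  pl3 (v5 1 0 0 s (- t1)) (v5 0 1 0 (c * t2) (1 + t2 + s)) (v5 0 0 1 t1 t2).
Definition planeB (b : F * F * F) := let: (b12, s) := b in let: (t1, t2) := b12 in planeB3 t1 t2 s.
Definition planeI : {vspace V} := pl3 (v5 1 0 0 0 0) (v5 0 0 0 1 0) (v5 0 0 0 0 1).

Lemma memLA a1 a2 a3 x : x \in lineA3 a1 a2 a3 ->
  exists k1 k2, x = v5 k1 k2 (k1 * a1 + k2 * (c * a3)) (k1 * a2 + k2 * (a1 + a3))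
                       (k1 * a3 + k2 * a2).
Proof.
move=> /mem2P[k1 [k2 ->]]; exists k1, k2.
by rewrite !v5_scale v5_add; congr v5; ring.
Qed.

Lemma memLI x : x \in lineI -> exists k1 k2, x = v5 0 0 k1 k2 0.
Proof.
move=> /mem2P[k1 [k2 ->]]; exists k1, k2.
by rewrite !v5_scale v5_add; congr v5; ring.
Qed.

Lemma memPB t1 t2 s x : x \in planeB3 t1 t2 s ->
  exists k1 k2 k3, x = v5 k1 k2 k3 (k1 * s + k2 * (c * t2) + k3 * t1)
                          (- (k1 * t1) + k2 * (1 + t2 + s) + k3 * t2).
Proof.
move=> /mem3P[k1 [k2 [k3 ->]]]; exists k1, k2, k3.
by rewrite !v5_scale !v5_add; congr v5; ring.
Qed.

Lemma memPI x : x \in planeI -> exists k1 k2 k3, x = v5 k1 0 0 k2 k3.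
Proof.
move=> /mem3P[k1 [k2 [k3 ->]]]; exists k1, k2, k3.
by rewrite !v5_scale !v5_add; congr v5; ring.
Qed.

Lemma dim_lineA a : \dim (lineA a) = 2%N.
Proof.
case: a => [[a1 a2] a3]; apply: dim_ln2 => k1 k2; rewrite !v5_scale v5_add v5_0 => /v5_inj[E1 E2 _ _ _].
by split; [apply: (zero_from E1) | apply: (zero_from E2)]; ring.
Qed.

Lemma dim_lineI : \dim lineI = 2%N.
Proof.
apply: dim_ln2 => k1 k2; rewrite !v5_scale v5_add v5_0 => /v5_inj[_ _ E1 E2 _].
by split; [apply: (zero_from E1) | apply: (zero_from E2)]; ring.
Qed.

Lemma dim_planeB b : \dim (planeB b) = 3%N.
Proof.
case: b => [[t1 t2] s]; apply: dim_pl3 => k1 k2 k3; rewrite !v5_scale !v5_add v5_0 => /v5_inj[E1 E2 E3 _ _].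
by split; [apply: (zero_from E1) | apply: (zero_from E2) | apply: (zero_from E3)]; ring.
Qed.

Lemma dim_planeI : \dim planeI = 3%N.
Proof.
apply: dim_pl3 => k1 k2 k3; rewrite !v5_scale !v5_add v5_0 => /v5_inj[E1 _ _ E2 E3].
by split; [apply: (zero_from E1) | apply: (zero_from E2) | apply: (zero_from E3)]; ring.
Qed.

Lemma triple_neq (a b : F * F * F) :
  a != b -> [|| a.1.1 - b.1.1 != 0, a.1.2 - b.1.2 != 0 | a.2 - b.2 != 0].
Proof.
case: a => [[a1 a2] a3]; case: b => [[b1 b2] b3] /=; rewrite !subr_eq0.
apply: contraR; rewrite !negb_or !negbK => /and3P[/eqP-> /eqP-> /eqP->].
by rewrite eqxx.
Qed.

Lemma oneF0 : (1 : F) = 0 -> False.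
Proof. by move/eqP; rewrite oner_eq0. Qed.

Lemma skewAA a b : a != b -> (lineA a :&: lineA b = 0)%VS.
Proof.
move=> /triple_neq; case: a => [[a1 a2] a3]; case: b => [[b1 b2] b3] /= dnz.
apply: cap0 => x /memLA[k1 [k2 ->]] /memLA[j1 [j2 /v5_inj[E1 E2 E3 E4 E5]]].
subst j1 j2.
have [k10 k20] : k1 = 0 /\ k2 = 0.
  apply: (skew_alg Hc (d1 := a1 - b1) (d2 := a2 - b2) (d3 := a3 - b3)) => //.
  - by apply: (zero_from E3); ring.
  - by apply: (zero_from E4); ring.
  - by apply: (zero_from E5); ring.
by rewrite k10 k20 v5_0; congr v5; ring.
Qed.

Lemma skewAI a : (lineA a :&: lineI = 0)%VS.
Proof.
case: a => [[a1 a2] a3] /=.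
apply: cap0 => x /memLA[k1 [k2 ->]] /memLI[j1 [j2 /v5_inj[E1 E2 E3 E4 E5]]].
by rewrite E1 E2 v5_0; congr v5; ring.
Qed.

Lemma meetBB b b' : b != b' -> \dim (planeB b :&: planeB b') = 1%N.
Proof.
move=> /triple_neq; case: b => [[t1 t2] s]; case: b' => [[u1 u2] r] /= dnz.
set d1 := t1 - u1 in dnz *; set d2 := t2 - u2 in dnz *; set d3 := s - r in dnz *.
set z1 := c * d2 ^+ 2 - d1 * d2 - d3 * d1.
set z2 := - (d1 ^+ 2 + d3 * d2).
set z3 := d3 ^+ 2 + d3 * d2 + c * d1 * d2.
apply: (dim_cap1 (z := z1 *: v5 1 0 0 s (- t1) + z2 *: v5 0 1 0 (c * t2) (1 + t2 + s)
                      + z3 *: v5 0 0 1 t1 t2)).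
- exact: (dim_planeB (t1, t2, s)).
- exact: (dim_planeB (u1, u2, r)).
move=> x /memPB[k1 [k2 [k3 ->]]] /memPB[j1 [j2 [j3 /v5_inj[E1 E2 E3 E4 E5]]]].
subst j1 j2 j3.
have U1 : k1 * d3 + k2 * (c * d2) + k3 * d1 = 0.
  by apply: (zero_from E4); rewrite /d1 /d2 /d3; ring.
have U2 : - (k1 * d1) + k2 * (d2 + d3) + k3 * d2 = 0.
  by apply: (zero_from E5); rewrite /d1 /d2 /d3; ring.
have zn : [|| z1 != 0, z2 != 0 | z3 != 0].
  apply/negPn/negP; rewrite !negb_or !negbK => /and3P[/eqP Z1 /eqP Z2 /eqP Z3].
  have Z2' : d1 ^+ 2 + d3 * d2 = 0 by apply/eqP; rewrite -oppr_eq0; apply/eqP.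
  have [D1 D2 D3] := minors_alg Hc Z1 Z2' Z3.
  by move: dnz; rewrite D1 D2 D3 eqxx.
have P1 : k2 * z3 = k3 * z2.
  by apply: (eq_lc (al := d1) (be := d3) U1 U2); rewrite /z2 /z3; ring.
have P2 : k1 * z3 = k3 * z1.
  by apply: (eq_lc (al := d2 + d3) (be := - (c * d2)) U1 U2); rewrite /z1 /z3; ring.
have P3 : k1 * z2 = k2 * z1.
  by apply: (eq_lc (al := - d2) (be := d1) U1 U2); rewrite /z1 /z2; ring.
have [l [K1 K2 K3]] := par_alg zn P1 P2 P3.
apply/vlineP; exists l; rewrite K1 K2 K3 !v5_scale !v5_add v5_scale; congr v5; ring.
Qed.

Lemma meetIB b : \dim (planeI :&: planeB b) = 1%N.
Proof.
case: b => [[t1 t2] s] /=.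
apply: (dim_cap1 (z := v5 1 0 0 s (- t1))).
- exact: dim_planeI.
- exact: (dim_planeB (t1, t2, s)).
move=> x /memPI[j1 [j2 [j3 ->]]] /memPB[k1 [k2 [k3 /v5_inj[E1 E2 E3 E4 E5]]]].
subst k2 k3.
by apply/vlineP; exists k1; rewrite E1 E4 E5 v5_scale; congr v5; ring.
Qed.

Lemma ncAB a b : ~~ (lineA a <= planeB b)%VS.
Proof.
case: a => [[a1 a2] a3]; case: b => [[t1 t2] s] /=; apply/negP => /subvP H.
have /memPB[k1 [k2 [k3 /v5_inj[E1 E2 E3 E4 E5]]]] := H _ (ln2_l _ _).
have /memPB[j1 [j2 [j3 /v5_inj[F1 F2 F3 F4 F5]]]] := H _ (ln2_r _ _).
subst k1 k2 k3 j1 j2 j3.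
apply: (contain_alg Hc (a1 := a1) (a2 := a2) (a3 := a3) (t1 := t1) (t2 := t2) (s := s)).
- by rewrite {1}E4; ring.
- by rewrite {1}E5; ring.
- by rewrite {1}F4; ring.
- by rewrite {1}F5; ring.
Qed.

Lemma ncAI a : ~~ (lineA a <= planeI)%VS.
Proof.
case: a => [[a1 a2] a3] /=; apply/negP => /subvP H.
have /memPI[j1 [j2 [j3 /v5_inj[E1 E2 E3 E4 E5]]]] := H _ (ln2_r _ _).
exact: oneF0.
Qed.

Lemma ncIB b : ~~ (lineI <= planeB b)%VS.
Proof.
case: b => [[t1 t2] s] /=; apply/negP => /subvP H.
have /memPB[k1 [k2 [k3 /v5_inj[E1 E2 E3 E4 E5]]]] := H _ (ln2_r _ _).
subst k1 k2 k3; apply: oneF0; rewrite {1}E4; ring.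
Qed.

Lemma ncII : ~~ (lineI <= planeI)%VS.
Proof.
apply/negP => /subvP H.
have /memPI[j1 [j2 [j3 /v5_inj[E1 E2 E3 E4 E5]]]] := H _ (ln2_l _ _).
exact: oneF0.
Qed.

End Geo.
Local Open Scope ring_scope.
Lemma exists_c (F : finFieldType) :
  (2%:R : F) != 0%R -> exists c : F, forall x : F, (x ^+ 3 - x)%R != c.
Proof.
move=> two.
pose f := fun x : F => (x ^+ 3 - x)%R.
have [/existsP[c /forallP Hc]|] := boolP [exists c : F, [forall x : F, f x != c]].
  by exists c.
rewrite negb_exists => /forallP H.
have surj : forall y : F, y \in codom f.
  move=> y; move: (H y); rewrite negb_forall => /existsP[x]; rewrite negbK => /eqP <-.
  exact: codom_f.
have : #|codom f| == #|F|.
  rewrite eqn_leq; apply/andP; split.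
    by rewrite -(size_codom f) card_size.
  by apply: subset_leq_card; apply/subsetP => y _; exact: surj.
move/image_injP => inj.
have e : f 1%R = f (-1)%R by rewrite /f; ring.
have := inj _ _ isT isT e.
move/eqP; rewrite -subr_eq0 opprK -mulr2n => /eqP E.
by move: two; rewrite E eqxx.
Qed.

Lemma two_neq0 (F : finFieldType) (q : nat) :
  odd_prime_power q -> #|F| = q -> (2%:R : F) != 0%R.
Proof.
move=> [p [k [pp op k0 ->]]] HF.
apply/negP => /eqP t0.
have Hp := card_finPcharP HF pp.
have H2 : 2 \in [pchar F]%R by rewrite inE /= t0 eqxx.
move: (pcharf_eq Hp 2); rewrite H2 => /esym.
rewrite inE => /eqP p2.
by move: op; rewrite -p2.
Qed.

Local Close Scope ring_scope.

Lemma memL (T : eqType) (I : finType) (f : I -> T) (g U : T) :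
  U \in [seq f a | a <- enum I] ++ [:: g] -> (exists a, U = f a) \/ U = g.
Proof.
rewrite mem_cat => /orP[/mapP[a _ ->]|]; first by left; exists a.
by rewrite mem_seq1 => /eqP ->; right.
Qed.

Lemma sizeL (T : Type) (F : finType) (f : F * F * F -> T) (g : T) :
  size ([seq f a | a <- enum {: F * F * F}] ++ [:: g]) = (#|F| ^ 3).+1.
Proof.
by rewrite size_cat size_map /= -cardE !card_prod addn1 !expnS expn0 muln1 mulnA.
Qed.

Lemma construction (F : finFieldType) (c : F) (Hc : forall x : F, (x ^+ 3 - x)%R != c) :
  exists (L P : seq {vspace PG4_space F}),
    (uniq L /\ size L = (#|F| ^ 3).+1 /\
     (forall U, U \in L -> is_line U) /\
     (forall U V, U \in L -> V \in L -> U != V -> skew_lines U V)) /\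
    (uniq P /\ size P = (#|F| ^ 3).+1 /\
     (forall A, A \in P -> is_plane A) /\
     (forall A B, A \in P -> B \in P -> A != B -> meet_in_point A B)) /\
    (forall U A, U \in L -> A \in P -> ~~ (U <= A)%VS).
Proof.
exists ([seq lineA c a | a <- enum {: F * F * F}] ++ [:: lineI F]).
exists ([seq planeB c b | b <- enum {: F * F * F}] ++ [:: planeI F]).
split; [|split].
- split; [|split; [exact: sizeL|split]].
  + rewrite cat_uniq; apply/and3P; split => //.
      rewrite map_inj_uniq ?enum_uniq // => a b E.
      apply/eqP; apply/negPn/negP => /(skewAA Hc); rewrite E capvv => H.
      by have := dim_lineA c b; rewrite H dimv0.
    rewrite /= orbF; apply/mapP => -[a _ E].
    by have := skewAI c a; rewrite -E capvv => H; have := dim_lineI F; rewrite H dimv0.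
  + by move=> U /memL[[a ->]|->]; [exact: dim_lineA | exact: dim_lineI].
  + move=> U V /memL[[a ->]|->] /memL[[b ->]|->] neq; rewrite /skew_lines.
    * by apply: (skewAA Hc); apply: contraNneq neq => ->.
    * exact: skewAI.
    * by rewrite capvC; exact: skewAI.
    * by rewrite eqxx in neq.
- split; [|split; [exact: sizeL|split]].
  + rewrite cat_uniq; apply/and3P; split => //.
      rewrite map_inj_uniq ?enum_uniq // => a b E.
      apply/eqP; apply/negPn/negP => /(meetBB Hc); rewrite E capvv => H.
      by have := dim_planeB c b; rewrite H.
    rewrite /= orbF; apply/mapP => -[a _ E].
    by have := meetIB c a; rewrite -E capvv => H; have := dim_planeI F; rewrite H.
  + by move=> U /memL[[a ->]|->]; [exact: dim_planeB | exact: dim_planeI].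
  + move=> U V /memL[[a ->]|->] /memL[[b ->]|->] neq; rewrite /meet_in_point.
    * by apply: (meetBB Hc); apply: contraNneq neq => ->.
    * by rewrite capvC; exact: meetIB.
    * exact: meetIB.
    * by rewrite eqxx in neq.
- move=> U A /memL[[a ->]|->] /memL[[b ->]|->].
  + exact: ncAB.
  + exact: ncAI.
  + exact: ncIB.
  + exact: ncII.
Qed.

Unset Implicit Arguments.

Theorem theorem2p5 (q : nat) (F : finFieldType) :
  odd_prime_power q -> #|F| = q ->
  exists (L P : seq {vspace PG4_space F}),
    (* L : q^3+1 distinct lines, pairwise skew *)
    (uniq L /\ size L = (q ^ 3).+1 /\
     (forall U, U \in L -> is_line U) /\
     (forall U V, U \in L -> V \in L -> U != V -> skew_lines U V)) /\
    (* P : q^3+1 distinct planes, any two meeting in exactly one point *)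
    (uniq P /\ size P = (q ^ 3).+1 /\
     (forall A, A \in P -> is_plane A) /\
     (forall A B, A \in P -> B \in P -> A != B -> meet_in_point A B)) /\
    (* no line of L lies in a plane of P *)
    (forall U A, U \in L -> A \in P -> ~~ (U <= A)%VS).
Proof.
move=> Hq HF.
have [c Hc] := exists_c (two_neq0 Hq HF).
by rewrite -HF; exact: construction Hc.
Qed.
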